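(* Let $G$ be a graph on $p$ vertices, $q\ge 2^{p-1}p^2$ an integer and $c=4q+2$. Suppose $\Psi$ is a proper $c$-colouring of $K_c^{G[K_q]}$ with colours $[c]$ such that $\Psi(\phi)\in\mathrm{Im}(\phi)$ for every simple map $\phi$. For $v\in V(G)$ and $b\in[c]$ let $I(v,b)=\{\phi \text{ simple}: \Psi(\phi)=b=\phi(v)\}$, and call $I(v,b)$ large if $|I(v,b)|\ge 2pc^{p-2}$. Then there is a vertex $v\in V(G)$ such that $|\{b\in[c]: I(v,b)\text{ is large}\}|>c/2$.
   Context: $[c]=\{1,\dots,c\}$. $G[K_q]$ has vertex set $V(G)\times[q]$, with $(x,i)\sim(y,j)$ iff $xy\in E(G)$, or $x=y$ and $i\ne j$. $K_c^{F}$ has as vertices all maps $V(F)\to[c]$, with $f\sim g$ iff $f(x)\ne g(y)$ and $f(y)\ne g(x)$ for every edge $xy$ of $F$. $\mathrm{Im}(f)$ is the image of $f$. A map $\phi\in V(K_c^{G[K_q]})$ is simple if $\phi(x,i)=\phi(x,j)$ for all $x\in V(G)$, $i,j\in[q]$; for simple $\phi$ write $\phi(x)$ for this common value. There are exactly $c^p$ simple maps. *)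

(* Defs.v *)
From mathcomp Require Import all_boot.
Set Implicit Arguments. Unset Strict Implicit. Unset Printing Implicit Defensive.

Definition simple_graph (V : finType) (e : rel V) : Prop :=
  symmetric e /\ irreflexive e.

(* Adjacency of the lexicographic product G[K_q] on V * 'I_q. *)
Definition lexK (V : finType) (e : rel V) (q : nat) : rel (V * 'I_q) :=
  fun u w => e u.1 w.1 || ((u.1 == w.1) && (u.2 != w.2)).

Arguments lexK [V] e q.

(* Vertices of K_c^F (F with vertex type T): all maps T -> [c] ([c] = 'I_c). *)
Definition expK (T : finType) (F : rel T) (c : nat)
    (f g : {ffun T -> 'I_c}) : bool :=
  [forall x, forall y, F x y ==> (f x != g y) && (f y != g x)].

Definition proper_exp_colouring (T : finType) (F : rel T) (c : nat)
    (Psi : {ffun T -> 'I_c} -> 'I_c) : Prop :=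
  forall f g, f != g -> expK F f g -> Psi f != Psi g.

Definition simple_map (V : finType) (q c : nat) (phi : {ffun V * 'I_q -> 'I_c}) : bool :=
  [forall x, forall i, forall j, phi (x, i) == phi (x, j)].

Definition Iset (V : finType) (q c : nat) (Psi : {ffun V * 'I_q -> 'I_c} -> 'I_c)
    (v : V) (b : 'I_c) : {set {ffun V * 'I_q -> 'I_c}} :=
  [set phi | simple_map phi && (Psi phi == b) && [forall i, phi (v, i) == b]].

(* I(v,b) large: |I(v,b)| >= 2 p c^(p-2), stated without truncated subtraction
   as |I(v,b)| * c^2 >= 2 p c^p. *)
Definition large (V : finType) (q c : nat) (Psi : {ffun V * 'I_q -> 'I_c} -> 'I_c)
    (v : V) (b : 'I_c) : bool :=
  2 * #|V| * c ^ #|V| <= #|Iset Psi v b| * c ^ 2.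

(* Main.v *)
Require Import Defs.
From mathcomp Require Import all_boot.
From mathcomp Require Import zify.

Lemma card_bigcup_le (T I : finType) (P : {set I}) (F : I -> {set T}) :
  #|\bigcup_(i in P) F i| <= \sum_(i in P) #|F i|.
Proof.
apply: (big_rec2 (fun (X : {set T}) n => #|X| <= n)); first by rewrite cards0.
move=> i X n _ h; rewrite cardsU.
apply: leq_trans (leq_subr _ _) _; exact: leq_add.
Qed.

Theorem lemma3 (V : finType) (e : rel V) (p q c : nat)
  (hG : simple_graph e) (hp : #|V| = p)
  (hq : 2 ^ p.-1 * p ^ 2 <= q) (hc : c = 4 * q + 2)
  (Psi : {ffun V * 'I_q -> 'I_c} -> 'I_c)
  (hPsi : proper_exp_colouring (lexK e q) Psi)
  (hIm : forall phi, simple_map phi -> Psi phi \in codom phi) :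
  exists v : V, c < 2 * #|[set b : 'I_c | large Psi v b]|.
Proof.
case: (boolP [exists v, c < 2 * #|[set b : 'I_c | large Psi v b]|]) => [/existsP//|].
rewrite negb_exists => /forallP Hall.
set L := fun v => [set b : 'I_c | large Psi v b].
have cpos : 0 < c by rewrite hc; lia.
have HS v : c <= 2 * #|~: L v|.
  have := Hall v; rewrite -/(L v) => H.
  have := cardsC (L v); rewrite card_ord; lia.
have [v0 _] : exists v0 : V, True.
  pose phi : {ffun V * 'I_q -> 'I_c} := [ffun _ => Ordinal cpos].
  have : simple_map phi by apply/forallP => x; apply/forallP => i; apply/forallP => j; rewrite !ffunE.
  move/hIm/codomP => [u _]; by exists u.1.
have ppos : 0 < p by rewrite -hp; apply/card_gt0P; exists v0.
case: p ppos hp hq hc => // p' _ hp hq hc.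
have qpos : 0 < q.
  apply: leq_trans hq; by rewrite muln_gt0 !expn_gt0.
pose i0 : 'I_q := Ordinal qpos.
pose emb (f : {ffun V -> 'I_c}) : {ffun V * 'I_q -> 'I_c} := [ffun u => f u.1].
have emb_inj : injective emb.
  move=> f g H; apply/ffunP => v.
  by move/ffunP: H => /(_ (v, i0)); rewrite /emb !ffunE.
pose Fam := family (fun v => mem (~: L v)).
have cardFam : #|Fam| = \prod_v #|~: L v|.
  by rewrite card_family foldrE big_map big_enum.
pose A := emb @: (Fam : {pred {ffun V -> 'I_c}}).
have cardA : #|A| = \prod_v #|~: L v| by rewrite card_imset // cardFam.
have h1 : c ^ p'.+1 <= 2 ^ p'.+1 * #|A|.
  have -> : c ^ p'.+1 = \prod_(v : V) c.
    by rewrite -hp -prod_nat_const; apply: eq_bigl.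
  have -> : 2 ^ p'.+1 = \prod_(v : V) 2.
    by rewrite -hp -prod_nat_const; apply: eq_bigl.
  rewrite cardA -big_split /=.
  by apply: leq_prod => v _; apply: HS.
pose B := [set x : V * 'I_c | x.2 \notin L x.1].
have sub : A \subset \bigcup_(x in B) Iset Psi x.1 x.2.
  apply/subsetP => phi /imsetP [f fF ->].
  have sm : simple_map (emb f).
    by apply/forallP => x; apply/forallP => i; apply/forallP => j; rewrite !ffunE.
  have := hIm _ sm => /codomP [u hu].
  apply/bigcupP; exists (u.1, f u.1).
    rewrite inE /=. by move: fF => /familyP /(_ u.1); rewrite inE.
  rewrite /Iset inE /= sm hu /emb !ffunE eqxx /=.
  by apply/forallP => i; rewrite ffunE.
have h2 : #|A| * c ^ 2 <= (p'.+1 * c) * (2 * p'.+1 * c ^ p'.+1).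
  apply: leq_trans (leq_mul (subset_leq_card sub) (leqnn _)) _.
  have := @card_bigcup_le _ _ B (fun x => Iset Psi x.1 x.2). move=> HH. apply: leq_trans (leq_mul HH (leqnn _)) _.
  rewrite big_distrl /=.
  apply: leq_trans (_ : \sum_(x in B) (2 * p'.+1 * c ^ p'.+1) <= _).
    apply: leq_sum => x; rewrite inE /L inE /large hp -ltnNge => H.
    exact: ltnW.
  rewrite sum_nat_const leq_mul2r; apply/orP; right.
  apply: leq_trans (max_card _) _; by rewrite card_prod card_ord hp.
move: h1 h2; set N := #|A|; set X := c ^ p'.+1.
have Xpos : 0 < X by rewrite expn_gt0 cpos.
rewrite expnS /= => h1 h2.
have h3 : N * c <= 2 * p'.+1 * p'.+1 * X.
  have h2' : (N * c) * c <= (2 * p'.+1 * p'.+1 * X) * c.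
    apply: leq_trans (leq_trans (eq_leq _) h2) (eq_leq _); rewrite ?expn2; nia.
  by rewrite leq_pmul2r in h2'.
move: hq; rewrite /= => hq.
set T := 2 ^ p' in h1 hq.
have h4 : X * c <= 2 * T * (2 * p'.+1 * p'.+1 * X).
  apply: leq_trans (leq_mul h1 (leqnn c)) _.
  rewrite -mulnA leq_mul2l; apply/orP; right; exact: h3.
have h5 : c <= 4 * T * (p'.+1 * p'.+1).
  rewrite -(leq_pmul2l Xpos); apply: leq_trans h4 _.
  apply: eq_leq; nia.
exfalso; rewrite hc in h5; rewrite -mulnn in hq; nia.
Qed.
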